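(* For every $M\in\mathcal{A}$ and every $k\ge\dim_{\mathbb{Q}}H_B(M)$ one has $P^k(M)=P^{k+1}(M)=\cdots=P^\infty(M)$.
   Context: Let $K\subseteq\mathbb{C}$ be a subfield and $\mathcal{A}$ a $\mathbb{Q}$-linear abelian category. A fiber functor over a field $F\supseteq\mathbb{Q}$ is a $\mathbb{Q}$-linear, exact, faithful covariant functor from $\mathcal{A}$ to finite-dimensional $F$-vector spaces. $H_B$ is a fiber functor over $\mathbb{Q}$ and $H_{dR}$ a fiber functor over $K$; $V^\vee$ is the $K$-dual, and $\alpha^\vee$ denotes the dual of $H_{dR}(\alpha)$. $H_B(M)\otimes_{\mathbb{Q}}H_{dR}(M)^\vee$ is a $K$-vector space via the second factor. For a short exact sequence $0\to N'\xrightarrow{\iota}M^m\xrightarrow{\pi}N\to0$, elements of $H_B(N')$ are regarded via $H_B(\iota)$ as elements $(\sigma_i)$ of $H_B(M)^m$, and elements of $H_{dR}(N)^\vee$ via $\pi^\vee$ as elements $(\omega_i)$ of $(H_{dR}(M)^\vee)^m$. For $k\ge1$, $P^k(M)$ is the quotient of $H_B(M)\otimes_{\mathbb{Q}}H_{dR}(M)^\vee$ by the $K$-span of all $\sum_{i=1}^m\sigma_i\otimes\omega_i$ with $m\le k$, $0\to N'\to M^m\to N\to0$ exact, $(\sigma_i)\in H_B(N')$, $(\omega_i)\in H_{dR}(N)^\vee$; the $P^k(M)$ are successive quotients and $P^\infty(M)$ is the quotient by the union of all these subspaces. *)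

(* Defs.v *)
From HB Require Import structures.
From mathcomp Require Import all_boot all_order all_algebra.
From mathcomp Require Import reals.
From mathcomp Require Import complex.
Set Implicit Arguments. Unset Strict Implicit. Unset Printing Implicit Defensive.
Import Order.TTheory GRing.Theory Num.Theory.
Local Open Scope ring_scope.

Record QLinCat := {
  Obj : Type;
  Mor : Obj -> Obj -> lmodType rat;
  idc : forall A, Mor A A;
  comp : forall A B C, Mor B C -> Mor A B -> Mor A C;
  compA : forall A B C D (h : Mor C D) (g : Mor B C) (f : Mor A B),
      comp h (comp g f) = comp (comp h g) f;
  comp1l : forall A B (f : Mor A B), comp (idc B) f = f;
  comp1r : forall A B (f : Mor A B), comp f (idc A) = f;
  compDl : forall A B C (a : rat) (g1 g2 : Mor B C) (f : Mor A B),
      comp (a *: g1 + g2) f = a *: comp g1 f + comp g2 f;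
  compDr : forall A B C (a : rat) (g : Mor B C) (f1 f2 : Mor A B),
      comp g (a *: f1 + f2) = a *: comp g f1 + comp g f2
}.

Arguments idc {q} A.
Arguments Mor : clear implicits.
Arguments comp {q A B C}.

Section Abelian.
Variable C : QLinCat.
Local Notation Ob := (Obj C).
Local Notation "g \oc f" := (comp g f) (at level 40, left associativity).

Definition is_kernel (K A B : Ob) (f : Mor C A B) (k : Mor C K A) : Prop :=
  f \oc k = 0 /\
  forall Z (g : Mor C Z A), f \oc g = 0 -> exists! h : Mor C Z K, k \oc h = g.

Definition is_cokernel (A B Q : Ob) (f : Mor C A B) (c : Mor C B Q) : Prop :=
  c \oc f = 0 /\
  forall Z (g : Mor C B Z), g \oc f = 0 -> exists! h : Mor C Q Z, h \oc c = g.

Definition is_mono (A B : Ob) (f : Mor C A B) : Prop :=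
  forall Z (g : Mor C Z A), f \oc g = 0 -> g = 0.

Definition is_epi (A B : Ob) (f : Mor C A B) : Prop :=
  forall Z (g : Mor C B Z), g \oc f = 0 -> g = 0.

Definition is_zero_obj (Z : Ob) : Prop :=
  (forall A (f : Mor C Z A), f = 0) /\ (forall A (f : Mor C A Z), f = 0).

Definition is_power (M : Ob) (m : nat) (X : Ob)
    (e : 'I_m -> Mor C M X) (p : 'I_m -> Mor C X M) : Prop :=
  (forall i j, p i \oc e j = if i == j then idc M else 0) /\
  \sum_(i < m) (e i \oc p i) = idc X.

Definition is_biproduct (A B X : Ob) (i1 : Mor C A X) (p1 : Mor C X A)
    (i2 : Mor C B X) (p2 : Mor C X B) : Prop :=
  [/\ p1 \oc i1 = idc A, p2 \oc i2 = idc B, p1 \oc i2 = 0, p2 \oc i1 = 0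
    & i1 \oc p1 + i2 \oc p2 = idc X].

Definition abelian : Prop :=
  [/\ (exists Z, is_zero_obj Z),
      (forall A B, exists X i1 p1 i2 p2, @is_biproduct A B X i1 p1 i2 p2),
      (forall A B (f : Mor C A B),
         (exists K (k : Mor C K A), is_kernel f k) /\
         (exists Q (c : Mor C B Q), is_cokernel f c)),
      (forall A B (f : Mor C A B), is_mono f ->
        exists Q (g : Mor C B Q), is_kernel g f)
    & (forall A B (f : Mor C A B), is_epi f ->
        exists K (g : Mor C K A), is_cokernel g f)].

Definition ses (N' X N : Ob) (i : Mor C N' X) (p : Mor C X N) : Prop :=
  is_kernel p i /\ is_cokernel i p.

(* Fiber functors, in coordinates: H(A) = 'rV[F]_(d A), and a morphism *)
(* f : A -> B acts on row vectors by v |-> v *m H f.                   *)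
Record fiber_functor (F : fieldType) (d : Ob -> nat)
    (H : forall A B, Mor C A B -> 'M[F]_(d A, d B)) : Prop := {
  ff_id : forall A, H _ _ (idc A) = 1%:M;
  ff_comp : forall A B D (g : Mor C B D) (f : Mor C A B),
      H _ _ (g \oc f) = H _ _ f *m H _ _ g;
  ff_linear : forall A B (a : rat) (f g : Mor C A B),
      H _ _ (a *: f + g) = ratr a *: H _ _ f + H _ _ g;
  ff_exact : forall N' X N (i : Mor C N' X) (p : Mor C X N), ses i p ->
      [/\ row_free (H _ _ i), row_full (H _ _ p) & (H _ _ i == kermx (H _ _ p))%MS];
  ff_faithful : forall A B (f : Mor C A B), H _ _ f = 0 -> f = 0
}.

End Abelian.

(* H_B(M) (x)_Q H_dR(M)^vee, in coordinates: 'M[K]_(dB M, dR M), with  *)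
(* sigma (x) omega |-> sigma^T omega^T. Elements of H_dR(M)^vee are    *)
(* column vectors, paired with rows by v *m omega; the dual of H_dR f  *)
(* is omega |-> H_dR f *m omega.                                       *)
Definition tens (K : fieldType) (b d : nat) (s : 'rV[rat]_b) (w : 'cV[K]_d)
  : 'M[K]_(b, d) := (map_mx ratr s)^T *m w^T.

Definition inSpan (K : fieldType) (V : lmodType K) (G : V -> Prop) (x : V) : Prop :=
  exists n (c : 'I_n -> K) (g : 'I_n -> V),
    (forall i, G (g i)) /\ x = \sum_(i < n) c i *: g i.

(* The generators sum_i sigma_i (x) omega_i coming from short exact
   sequences 0 -> N' -> M^m -> N -> 0, with m satisfying bound m. *)
Definition gens (C : QLinCat) (K : fieldType)
    (dB : Obj C -> nat) (HB : forall A B, Mor C A B -> 'M[rat]_(dB A, dB B))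
    (dR : Obj C -> nat) (HdR : forall A B, Mor C A B -> 'M[K]_(dR A, dR B))
    (bound : nat -> Prop) (M : Obj C) (x : 'M[K]_(dB M, dR M)) : Prop :=
  exists (m : nat) (X N' N : Obj C) (e : 'I_m -> Mor C M X) (p : 'I_m -> Mor C X M)
         (i : Mor C N' X) (q : Mor C X N),
    [/\ bound m, is_power e p, ses i q &
      (exists (sigma : 'rV[rat]_(dB N')) (omega : 'cV[K]_(dR N)),
        x = \sum_(j < m) tens (sigma *m HB _ _ (comp (p j) i))
                              (HdR _ _ (comp q (e j)) *m omega))].

(* the subspace killed in P^k(M) *)
Definition Rel (C : QLinCat) (K : fieldType) dB HB dR HdR (k : nat) (M : Obj C)
  : 'M[K]_(dB M, dR M) -> Prop :=
  inSpan (@gens C K dB HB dR HdR (fun m => (m <= k)%N) M).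

(* the subspace killed in P^oo(M) : union of the above = span of all gens *)
Definition RelInf (C : QLinCat) (K : fieldType) dB HB dR HdR (M : Obj C)
  : 'M[K]_(dB M, dR M) -> Prop :=
  inSpan (@gens C K dB HB dR HdR (fun _ => True) M).

Arguments gens {C K dB} HB {dR} HdR bound M x.
Arguments Rel {C K dB} HB {dR} HdR k M _.
Arguments RelInf {C K dB} HB {dR} HdR M _.

(* Main.v *)
From Pilot Require Import Defs.
From HB Require Import structures.
From mathcomp Require Import all_boot all_order all_algebra.
From mathcomp Require Import reals.
From mathcomp Require Import complex.
From Stdlib Require Import ClassicalEpsilon.
Set Implicit Arguments. Unset Strict Implicit. Unset Printing Implicit Defensive.
Import Order.TTheory GRing.Theory Num.Theory.
Local Open Scope ring_scope.
Local Notation cmp := Pilot.Defs.comp.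

Lemma compD_l (C : QLinCat) (A B D : Obj C) (g1 g2 : Mor C B D) (f : Mor C A B) :
  cmp (g1 + g2) f = cmp g1 f + cmp g2 f.
Proof. by have := compDl 1 g1 g2 f; rewrite !scale1r. Qed.
Lemma compD_r (C : QLinCat) (A B D : Obj C) (g : Mor C B D) (f1 f2 : Mor C A B) :
  cmp g (f1 + f2) = cmp g f1 + cmp g f2.
Proof. by have := compDr 1 g f1 f2; rewrite !scale1r. Qed.
Lemma comp0_l (C : QLinCat) (A B D : Obj C) (f : Mor C A B) :
  cmp (0 : Mor C B D) f = 0.
Proof.
have H := compD_l (0 : Mor C B D) 0 f; rewrite addr0 in H.
by apply: (@addrI _ (cmp (0 : Mor C B D) f)); rewrite addr0 -H.
Qed.
Lemma comp0_r (C : QLinCat) (A B D : Obj C) (g : Mor C B D) :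
  cmp g (0 : Mor C A B) = 0.
Proof.
have H := compD_r g (0 : Mor C A B) 0; rewrite addr0 in H.
by apply: (@addrI _ (cmp g (0 : Mor C A B))); rewrite addr0 -H.
Qed.
Lemma compZ_l (C : QLinCat) (A B D : Obj C) a (g : Mor C B D) (f : Mor C A B) :
  cmp (a *: g) f = a *: cmp g f.
Proof. by have := compDl a g 0 f; rewrite !addr0 comp0_l addr0. Qed.
Lemma compZ_r (C : QLinCat) (A B D : Obj C) a (g : Mor C B D) (f : Mor C A B) :
  cmp g (a *: f) = a *: cmp g f.
Proof. by have := compDr a g f 0; rewrite !addr0 comp0_r addr0. Qed.
Lemma compN_l (C : QLinCat) (A B D : Obj C) (g : Mor C B D) (f : Mor C A B) :
  cmp (- g) f = - cmp g f.
Proof. by rewrite -scaleN1r compZ_l scaleN1r. Qed.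
Lemma compN_r (C : QLinCat) (A B D : Obj C) (g : Mor C B D) (f : Mor C A B) :
  cmp g (- f) = - cmp g f.
Proof. by rewrite -scaleN1r compZ_r scaleN1r. Qed.
Lemma compB_l (C : QLinCat) (A B D : Obj C) (g1 g2 : Mor C B D) (f : Mor C A B) :
  cmp (g1 - g2) f = cmp g1 f - cmp g2 f.
Proof. by rewrite compD_l compN_l. Qed.
Lemma compB_r (C : QLinCat) (A B D : Obj C) (g : Mor C B D) (f1 f2 : Mor C A B) :
  cmp g (f1 - f2) = cmp g f1 - cmp g f2.
Proof. by rewrite compD_r compN_r. Qed.
Lemma compsum_l (C : QLinCat) (A B D : Obj C) n (g : 'I_n -> Mor C B D) (f : Mor C A B) :
  cmp (\sum_(j < n) g j) f = \sum_(j < n) cmp (g j) f.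
Proof.
apply: (big_morph (fun h => cmp h f)); first by move=> *; exact: compD_l.
exact: comp0_l.
Qed.
Lemma compsum_r (C : QLinCat) (A B D : Obj C) n (g : Mor C B D) (f : 'I_n -> Mor C A B) :
  cmp g (\sum_(j < n) f j) = \sum_(j < n) cmp g (f j).
Proof.
apply: (big_morph (fun h => cmp g h)); first by move=> *; exact: compD_r.
exact: comp0_r.
Qed.

Lemma ffD (C : QLinCat) (F : fieldType) d H (hH : @fiber_functor C F d H)
  (A B : Obj C) (f g : Mor C A B) : H _ _ (f + g) = H _ _ f + H _ _ g.
Proof. by have := ff_linear hH 1 f g; rewrite scale1r (ratr_nat _ 1) scale1r. Qed.
Lemma ff0 (C : QLinCat) (F : fieldType) d H (hH : @fiber_functor C F d H)
  (A B : Obj C) : H A B 0 = 0.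
Proof.
have E := ffD hH (0 : Mor C A B) 0; rewrite addr0 in E.
by apply: (@addrI _ (H A B 0)); rewrite addr0 -E.
Qed.
Lemma ffZ (C : QLinCat) (F : fieldType) d H (hH : @fiber_functor C F d H)
  (A B : Obj C) a (f : Mor C A B) : H _ _ (a *: f) = ratr a *: H _ _ f.
Proof. by have := ff_linear hH a f 0; rewrite addr0 ff0 // addr0. Qed.
Lemma ffN (C : QLinCat) (F : fieldType) d H (hH : @fiber_functor C F d H)
  (A B : Obj C) (f : Mor C A B) : H _ _ (- f) = - H _ _ f.
Proof.
apply: (@addrI _ (H _ _ f)); by rewrite -ffD // !subrr ff0.
Qed.
Lemma ffB (C : QLinCat) (F : fieldType) d H (hH : @fiber_functor C F d H)
  (A B : Obj C) (f g : Mor C A B) : H _ _ (f - g) = H _ _ f - H _ _ g.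
Proof. by rewrite ffD // ffN. Qed.
Lemma ffsum (C : QLinCat) (F : fieldType) d H (hH : @fiber_functor C F d H)
  (A B : Obj C) n (f : 'I_n -> Mor C A B) :
  H _ _ (\sum_(j < n) f j) = \sum_(j < n) H _ _ (f j).
Proof.
apply: (big_morph (H A B)); first by move=> *; exact: ffD.
exact: ff0.
Qed.

Lemma kernel_mono (C : QLinCat) (K A B : Obj C) (f : Mor C A B) (k : Mor C K A) :
  is_kernel f k -> is_mono k.
Proof.
move=> [fk0 U] Z g kg0.
have h0 : cmp f (cmp k g) = 0 by rewrite kg0 comp0_r.
have [h [_ uq]] := U Z _ h0.
by rewrite -(uq g erefl) (uq 0); rewrite ?comp0_r.
Qed.
Lemma coker_epi (C : QLinCat) (A B Q : Obj C) (f : Mor C A B) (c : Mor C B Q) :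
  is_cokernel f c -> is_epi c.
Proof.
move=> [cf0 U] Z g gc0.
have h0 : cmp (cmp g c) f = 0 by rewrite gc0 comp0_l.
have [h [_ uq]] := U Z _ h0.
by rewrite -(uq g erefl) (uq 0); rewrite ?comp0_l.
Qed.
Lemma mono_cancel (C : QLinCat) (A B Z : Obj C) (k : Mor C A B) (g1 g2 : Mor C Z A) :
  is_mono k -> cmp k g1 = cmp k g2 -> g1 = g2.
Proof.
move=> mk E; apply/eqP; rewrite -subr_eq0; apply/eqP; apply: mk.
by rewrite compB_r E subrr.
Qed.
Lemma epi_cancel (C : QLinCat) (A B Z : Obj C) (c : Mor C A B) (g1 g2 : Mor C B Z) :
  is_epi c -> cmp g1 c = cmp g2 c -> g1 = g2.
Proof.
move=> ec E; apply/eqP; rewrite -subr_eq0; apply/eqP; apply: ec.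
by rewrite compB_l E subrr.
Qed.

Lemma mono_kernel (C : QLinCat) (hC : abelian C) (A B Q : Obj C)
  (f : Mor C A B) (c : Mor C B Q) :
  is_mono f -> is_cokernel f c -> is_kernel c f.
Proof.
case: hC => _ _ _ hM _ mf [cf0 U].
have [Q' [g [gf0 Ug]]] := hM _ _ f mf.
have [h [hc _]] := U _ g gf0.
split=> // Z g' cg'0.
apply: Ug; by rewrite -hc -Pilot.Defs.compA cg'0 comp0_r.
Qed.
Lemma epi_cokernel (C : QLinCat) (hC : abelian C) (A B K : Obj C)
  (f : Mor C A B) (k : Mor C K A) :
  is_epi f -> is_kernel f k -> is_cokernel k f.
Proof.
case: hC => _ _ _ _ hE ef [fk0 U].
have [K' [g [fg0 Ug]]] := hE _ _ f ef.
have [h [hk _]] := U _ g fg0.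
split=> // Z g' g'k0.
apply: Ug; by rewrite -hk Pilot.Defs.compA g'k0 comp0_l.
Qed.

Lemma kernel_ses (C : QLinCat) (hC : abelian C) (A B K Q : Obj C)
  (f : Mor C A B) (k : Mor C K A) (c : Mor C A Q) :
  is_kernel f k -> is_cokernel k c -> ses k c.
Proof. move=> hk hc; split=> //; apply: mono_kernel hc => //; exact: kernel_mono hk. Qed.

Lemma epi_ses (C : QLinCat) (hC : abelian C) (A B K : Obj C)
  (f : Mor C A B) (k : Mor C K A) :
  is_epi f -> is_kernel f k -> ses k f.
Proof. by move=> ef hk; split=> //; apply: epi_cokernel. Qed.

Lemma mono_ses (C : QLinCat) (hC : abelian C) (A B : Obj C) (f : Mor C A B) :
  is_mono f -> exists Q (c : Mor C B Q), ses f c.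
Proof.
move=> mf; have [_ _ hKC _ _] := hC.
have [_ [Q [c hc]]] := hKC _ _ f.
exists Q, c; split=> //; exact: mono_kernel hc.
Qed.

Lemma epi_comp (C : QLinCat) (A B D : Obj C) (g : Mor C B D) (f : Mor C A B) :
  is_epi g -> is_epi f -> is_epi (cmp g f).
Proof. move=> eg ef Z h; rewrite Pilot.Defs.compA => /ef; exact: eg. Qed.

Lemma coim_mono (C : QLinCat) (hC : abelian C) (Y N N'' N3 : Obj C)
  (f : Mor C Y N) (k : Mor C N'' Y) (c : Mor C Y N3) (m : Mor C N3 N) :
  is_kernel f k -> is_cokernel k c -> cmp m c = f -> is_mono m.
Proof.
move=> hk hc mcf Z g mg0.
have [_ _ hKC _ _] := hC.
have [_ [T [t ht]]] := hKC _ _ g.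
have [m' [m't _]] := ht.2 _ m mg0.
have et := coker_epi ht; have ec := coker_epi hc.
set u := cmp t c.
have eu : is_epi u by apply: epi_comp.
have [[L [l hl]] _] := hKC _ _ u.
have fl0 : cmp f l = 0.
  by rewrite -mcf -m't -!Pilot.Defs.compA (Pilot.Defs.compA t c l) hl.1 comp0_r.
have [s [ks _]] := hk.2 _ l fl0.
have hu := epi_cokernel hC eu hl.
have cl0 : cmp c l = 0 by rewrite -ks Pilot.Defs.compA hc.1 comp0_l.
have [w [wu _]] := hu.2 _ c cl0.
have wt1 : cmp w t = idc _.
  apply: (epi_cancel ec); by rewrite -Pilot.Defs.compA comp1l.
by rewrite -(comp1l g) -wt1 -Pilot.Defs.compA ht.1 comp0_r.
Qed.

Lemma ratrD_K (R : realType) (K : fieldType) (embK : {rmorphism K -> R[i]}) (a b : rat) :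
  ratr (a + b) = ratr a + ratr b :> K.
Proof. apply: (fmorph_inj embK). rewrite [RHS](rmorphD embK).
etransitivity; first exact: (fmorph_rat embK (a+b)).
rewrite (rmorphD (ratr : rat -> R[i])); congr (_ + _); symmetry; [exact: (fmorph_rat embK a)|exact: (fmorph_rat embK b)]. Qed.
Lemma ratrM_K (R : realType) (K : fieldType) (embK : {rmorphism K -> R[i]}) (a b : rat) :
  ratr (a * b) = ratr a * ratr b :> K.
Proof. apply: (fmorph_inj embK). rewrite [RHS](rmorphM embK).
etransitivity; first exact: (fmorph_rat embK (a*b)).
rewrite (rmorphM (ratr : rat -> R[i])); congr (_ * _); symmetry; [exact: (fmorph_rat embK a)|exact: (fmorph_rat embK b)]. Qed.
Lemma ratr_id (a : rat) : ratr a = a.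
Proof. by rewrite -(fmorph_eq_rat idfun). Qed.
Lemma ratr0_K (K : fieldType) : ratr 0 = 0 :> K.
Proof. exact: (ratr_nat K 0). Qed.

Lemma tensDr (K : fieldType) b d (s : 'rV[rat]_b) (w1 w2 : 'cV[K]_d) :
  tens s (w1 + w2) = tens s w1 + tens s w2.
Proof. by rewrite /tens linearD mulmxDr. Qed.
Lemma tensZr (K : fieldType) b d (s : 'rV[rat]_b) c (w : 'cV[K]_d) :
  tens s (c *: w) = c *: tens s w.
Proof. by rewrite /tens linearZ /= scalemxAr. Qed.
Lemma tenssum_l (R : realType) (K : fieldType) (embK : {rmorphism K -> R[i]}) b d n
  (c : 'I_n -> rat) (s : 'I_n -> 'rV[rat]_b) (w : 'cV[K]_d) :
  tens (\sum_(j < n) c j *: s j) w = \sum_(j < n) ratr (c j) *: tens (s j) w.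
Proof.
rewrite /tens.
have -> : map_mx ratr (\sum_(j < n) c j *: s j) = \sum_(j < n) ratr (c j) *: map_mx (ratr : rat -> K) (s j).
  apply/matrixP => x y; rewrite !mxE summxE.
  rewrite (big_morph (ratr : rat -> K) (ratrD_K embK) (ratr0_K K)).
  rewrite summxE; apply: eq_bigr => j _; by rewrite !mxE (ratrM_K embK).
rewrite linear_sum mulmx_suml; apply: eq_bigr => j _.
by rewrite linearZ /= scalemxAl.
Qed.

Lemma row_free_inj (F : fieldType) m n (A : 'M[F]_(m, n)) (v : 'rV_m) :
  row_free A -> v *m A = 0 -> v = 0.
Proof.
move=> /row_freeP [B AB] vA0.
by rewrite -(mulmx1 v) -AB mulmxA vA0 mul0mx.
Qed.

Lemma ker_factor (F : fieldType) m n p (A : 'M[F]_(m, n)) (Bm : 'M[F]_(n, p)) (v : 'rV_n) :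
  (A == kermx Bm)%MS -> v *m Bm = 0 -> exists w, v = w *m A.
Proof.
move=> /andP [_ kA] /sub_kermxP vk.
by apply/submxP; apply: submx_trans kA.
Qed.

Lemma sum_delta (V : lmodType rat) n (f : 'I_n -> rat) (j : 'I_n) (x : V) :
  \sum_(l < n) f l *: (if l == j then x else 0) = f j *: x.
Proof.
rewrite (bigD1 j) //= eqxx big1 ?addr0 // => l /negbTE ->; by rewrite scaler0.
Qed.

Lemma step (C : QLinCat) (hC : abelian C) (R : realType) (K : fieldType)
  (embK : {rmorphism K -> R[i]})
  (dB : Obj C -> nat) (HB : forall A B, Mor C A B -> 'M[rat]_(dB A, dB B))
  (hB : fiber_functor HB)
  (dR : Obj C -> nat) (HdR : forall A B, Mor C A B -> 'M[K]_(dR A, dR B))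
  (hdR : fiber_functor HdR)
  (M : Obj C) n (X N' N : Obj C) (e : 'I_n.+1 -> Mor C M X) (p : 'I_n.+1 -> Mor C X M)
  (i : Mor C N' X) (q : Mor C X N) (sigma : 'rV[rat]_(dB N')) (omega : 'cV[K]_(dR N))
  (r : 'I_n.+1) (d : 'I_n -> rat) :
  is_power e p -> ses i q ->
  sigma *m HB _ _ (cmp (p r) i) =
    \sum_(j < n) d j *: (sigma *m HB _ _ (cmp (p (lift r j)) i)) ->
  gens HB HdR (fun m => m = n) M
    (\sum_(j < n.+1) tens (sigma *m HB _ _ (cmp (p j) i)) (HdR _ _ (cmp q (e j)) *m omega)).
Proof.
move=> [pe sep] [[qi0 Uq] [iq0 Ui]] hdep.
have [_ _ hKC _ _] := hC.
have lr_neq : forall j, (lift r j == r) = false.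
  by move=> j; rewrite eq_sym (negbTE (neq_lift _ _)).
pose pr := p r - \sum_(j < n) d j *: p (lift r j).
have pre : cmp pr (e r) = idc M.
  rewrite compB_l compsum_l pe eqxx big1 ?subr0 // => j _.
  by rewrite compZ_l pe lr_neq scaler0.
have epr : is_epi pr.
  by move=> Z g gpr0; rewrite -(comp1r g) -pre Pilot.Defs.compA gpr0 comp0_l.
have [[Y [k hk]] _] := hKC _ _ pr.
pose e' := fun j => e (lift r j) + d j *: e r.
have pre' : forall j, cmp pr (e' j) = 0.
  move=> j; rewrite /e' compD_r compZ_r pre compB_l compsum_l pe.
  rewrite eq_sym lr_neq.
  under eq_bigr => l _ do rewrite compZ_l pe (inj_eq (@lift_inj _ r)).
  by rewrite sum_delta sub0r addNr.
have hex : forall j, exists h, cmp k h = e' j.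
  by move=> j; have [h [hh _]] := hk.2 _ _ (pre' j); exists h.
pose eY := fun j => proj1_sig (constructive_indefinite_description _ (hex j)).
have heY : forall j, cmp k (eY j) = e' j.
  by move=> j; exact: (proj2_sig (constructive_indefinite_description _ (hex j))).
pose pY := fun j => cmp (p (lift r j)) k.
have mk := kernel_mono hk.
have powY : is_power eY pY.
  split.
    move=> a b; rewrite /pY -Pilot.Defs.compA heY /e' compD_r compZ_r !pe.
    by rewrite (inj_eq (@lift_inj _ r)) lr_neq scaler0 addr0.
  apply: (mono_cancel mk); rewrite comp1r compsum_r.
  have E1 : forall j, cmp k (cmp (eY j) (pY j)) = cmp (cmp (e' j) (p (lift r j))) k.
    by move=> j; rewrite /pY Pilot.Defs.compA heY Pilot.Defs.compA.
  under eq_bigr => j _ do rewrite E1.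
  rewrite -compsum_l.
  have E2 : \sum_(j < n) cmp (e' j) (p (lift r j)) = idc X - cmp (e r) pr.
    rewrite -sep (bigD1_ord r) //= /pr compB_r compsum_r.
    rewrite /e'; under eq_bigr => j _ do rewrite compD_l compZ_l.
    under [X in _ = _ - (_ - X)]eq_bigr => j _ do rewrite compZ_r.
    rewrite big_split /= opprB [cmp (e r) (p r) + _]addrC -addrA [cmp (e r) (p r) + _]addrC subrK //.
  by rewrite E2 compB_l comp1l -Pilot.Defs.compA hk.1 comp0_r subr0.
pose f := cmp q k.
have [[N2 [k2 hk2]] _] := hKC _ _ f.
have [_ [N3 [c hc]]] := hKC _ _ k2.
have [mm [mmc _]] := hc.2 _ f hk2.1.
have sesY : ses k2 c := kernel_ses hC hk2 hc.
have mmono := coim_mono hC hk2 hc mmc.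
have [Q4 [c4 ses4]] := mono_ses hC mmono.
have [rfm _ _] := ff_exact hB ses4.
have sesk : ses k pr := epi_ses hC epr hk.
pose s := sigma *m HB _ _ i.
have spr : s *m HB _ _ pr = 0.
  rewrite /pr ffB // ffsum //.
  under eq_bigr => j _ do rewrite ffZ // ratr_id.
  rewrite mulmxBr mulmx_sumr /s -mulmxA -(ff_comp hB) hdep.
  apply/eqP; rewrite subr_eq0; apply/eqP; apply: eq_bigr => j _.
  by rewrite (ff_comp hB) mulmxA scalemxAr.
have [_ _ kk] := ff_exact hB sesk.
have [tau htau] := ker_factor kk spr.
have tf : (tau *m HB _ _ c) *m HB _ _ mm = 0.
  rewrite -mulmxA -(ff_comp hB) mmc /f (ff_comp hB) mulmxA -htau /s -mulmxA.
  by rewrite -(ff_comp hB) qi0 ff0 // mulmx0.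
have [_ _ kY] := ff_exact hB sesY.
have [sig2 hs2] := ker_factor kY (row_free_inj rfm tf).
exists n, Y, N2, N3, eY, pY, k2, c; split => //.
exists sig2, (HdR _ _ mm *m omega).
have ES : forall j, sig2 *m HB _ _ (cmp (pY j) k2) = sigma *m HB _ _ (cmp (p (lift r j)) i).
  move=> j; rewrite (ff_comp hB) mulmxA -hs2 /pY (ff_comp hB) mulmxA -htau /s.
  by rewrite -mulmxA -(ff_comp hB).
have EW : forall j, HdR _ _ (cmp c (eY j)) *m (HdR _ _ mm *m omega) =
    HdR _ _ (cmp q (e (lift r j))) *m omega + ratr (d j) *: (HdR _ _ (cmp q (e r)) *m omega).
  move=> j; rewrite mulmxA -(ff_comp hdR) Pilot.Defs.compA mmc /f -Pilot.Defs.compA heY.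
  by rewrite /e' compD_r compZ_r (ffD hdR) (ffZ hdR) mulmxDl scalemxAl.
under [RHS]eq_bigr => j _ do rewrite ES EW tensDr tensZr.
rewrite big_split /= -(tenssum_l embK) -hdep (bigD1_ord r) //= addrC. reflexivity.
Qed.

Lemma inSpan_mono (K : fieldType) (V : lmodType K) (G1 G2 : V -> Prop) x :
  (forall y, G1 y -> G2 y) -> inSpan G1 x -> inSpan G2 x.
Proof. move=> H [n [c [g [Hg ->]]]]; exists n, c, g; split=> // j; exact: H. Qed.

Lemma gens_mono (C : QLinCat) (K : fieldType)
  (dB : Obj C -> nat) (HB : forall A B, Mor C A B -> 'M[rat]_(dB A, dB B))
  (dR : Obj C -> nat) (HdR : forall A B, Mor C A B -> 'M[K]_(dR A, dR B))
  (b1 b2 : nat -> Prop) M x :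
  (forall m, b1 m -> b2 m) -> gens HB HdR b1 M x -> gens HB HdR b2 M x.
Proof.
move=> H [m [X [N' [N [e [p [i [q [bm pw hs ex]]]]]]]]].
exists m, X, N', N, e, p, i, q; split=> //; exact: H.
Qed.

Lemma reduce (C : QLinCat) (hC : abelian C) (R : realType) (K : fieldType)
  (embK : {rmorphism K -> R[i]})
  (dB : Obj C -> nat) (HB : forall A B, Mor C A B -> 'M[rat]_(dB A, dB B))
  (hB : fiber_functor HB)
  (dR : Obj C -> nat) (HdR : forall A B, Mor C A B -> 'M[K]_(dR A, dR B))
  (hdR : fiber_functor HdR)
  (M : Obj C) (k : nat) : (dB M <= k)%N ->
  forall m (X N' N : Obj C) (e : 'I_m -> Mor C M X) (p : 'I_m -> Mor C X M)
  (i : Mor C N' X) (q : Mor C X N) (sigma : 'rV[rat]_(dB N')) (omega : 'cV[K]_(dR N)),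
  is_power e p -> ses i q ->
  gens HB HdR (fun m => (m <= k)%N) M
    (\sum_(j < m) tens (sigma *m HB _ _ (cmp (p j) i)) (HdR _ _ (cmp q (e j)) *m omega)).
Proof.
move=> hk m; elim: m => [|n IH] X N' N e p i q sigma omega pw hs.
  by exists 0%N, X, N', N, e, p, i, q; split=> //; exists sigma, omega.
case: (leqP n.+1 k) => hnk.
  by exists n.+1, X, N', N, e, p, i, q; split=> //; exists sigma, omega.
pose S := \matrix_(l < n.+1) (sigma *m HB _ _ (cmp (p l) i)).
have nrf : ~~ row_free S.
  rewrite -row_leq_rank -ltnNge.
  exact: leq_ltn_trans (rank_leq_col S) (leq_ltn_trans hk hnk).
have [r /submxP [D hD]] := row_freePn _ nrf.
have hdep : sigma *m HB _ _ (cmp (p r) i) =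
    \sum_(j < n) D 0 j *: (sigma *m HB _ _ (cmp (p (lift r j)) i)).
  rewrite -[LHS](rowK (fun l => sigma *m HB _ _ (cmp (p l) i))) -/S hD mulmx_sum_row.
  apply: eq_bigr => j _; congr (_ *: _).
  apply/matrixP => a b; by rewrite (ord1 a) !mxE.
have := step hC embK hB hdR omega pw hs hdep.
move=> [m' [X' [N2 [N3 [e' [p' [i' [q' [Em pw' hs' [sig' [om' Ex]]]]]]]]]]]; subst m'; rewrite Ex.
exact: IH.
Qed.

Theorem mainTheorem3 (C : QLinCat) (hC : abelian C)
    (R : realType) (K : fieldType) (embK : {rmorphism K -> R[i]})
    (dB : Obj C -> nat) (HB : forall A B, Mor C A B -> 'M[rat]_(dB A, dB B))
    (hB : fiber_functor HB)
    (dR : Obj C -> nat) (HdR : forall A B, Mor C A B -> 'M[K]_(dR A, dR B))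
    (hdR : fiber_functor HdR)
    (M : Obj C) (k : nat) :
  (1 <= k)%N -> (dB M <= k)%N ->
  (forall j, (k <= j)%N ->
     forall x, Rel HB HdR j M x <-> Rel HB HdR k M x) /\
  (forall x, RelInf HB HdR M x <-> Rel HB HdR k M x).
Proof.
move=> _ hk.
have red : forall b x, gens HB HdR b M x -> gens HB HdR (fun m => (m <= k)%N) M x.
  move=> b x [m [X [N' [N [e [p [i [q [_ pw hs [sig [om ->]]]]]]]]]]].
  exact: (reduce hC embK hB hdR hk).
split.
  move=> j hkj x; split; apply: inSpan_mono.
    by move=> y; apply: red.
  by move=> y; apply: gens_mono => m hm; exact: leq_trans hkj.
move=> x; split; apply: inSpan_mono.
  by move=> y; apply: red.
by move=> y; apply: gens_mono.
Qed.
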